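(* Let $\mathcal I$ be an ideal on $\omega$. (1) There is $X\subseteq\omega^\omega$ (with the subspace topology of the Baire space) such that $|X|=\mathrm{non}(\mathcal I\text{-p},\mathcal I\text{-}\sigma\text{-u})$ and $X\notin(\mathcal I\text{-p},\mathcal I\text{-}\sigma\text{-u})$. (2) If $\mathcal I$ is not countably generated, then there is $X\subseteq2^\omega$ (with the subspace topology of the Cantor space) such that $|X|=\mathrm{non}(\mathcal I\text{-qn},\mathcal I\text{-}\sigma\text{-u})$ and $X\notin(\mathcal I\text{-qn},\mathcal I\text{-}\sigma\text{-u})$. (3) There is $X\subseteq\omega^\omega$ such that $|X|=\mathrm{non}(\mathcal I\text{-p},\mathcal I\text{-qn})$ and $X\notin(\mathcal I\text{-p},\mathcal I\text{-qn})$.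
   Context: An ideal on $\omega$ is a family $\mathcal I\subseteq\mathcal P(\omega)$ closed under finite unions and subsets, containing all finite sets, with $\omega\notin\mathcal I$; it is countably generated if there is a countable $\mathcal B\subseteq\mathcal I$ such that every $A\in\mathcal I$ is contained in some $B\in\mathcal B$. A real sequence $(a_n)$ is $\mathcal I$-convergent to $0$ if $\{n:|a_n|\ge\varepsilon\}\in\mathcal I$ for all $\varepsilon>0$. For a sequence $(f_n)$ of real functions on a set $X$: $\mathcal I$-p means $(f_n(x))$ is $\mathcal I$-convergent to $0$ for each $x$; $\mathcal I$-u means $\{n:\exists x\in X\,(|f_n(x)|\ge\varepsilon)\}\in\mathcal I$ for each $\varepsilon>0$; $\mathcal I$-$\sigma$-u means $X=\bigcup_{k\in\omega}X_k$ with $(f_n\restriction X_k)$ $\mathcal I$-u convergent to $0$ for each $k$; $\mathcal I$-qn means there is a sequence $(\varepsilon_n)$ of positive reals $\mathcal I$-convergent to $0$ with $\{n:|f_n(x)|\ge\varepsilon_n\}\in\mathcal I$ for each $x$. $\mathcal C(X)$ = continuous real functions on $X$. Normal space = Hausdorff space in which disjoint closed sets have disjoint open neighbourhoods. $(\alpha,\beta)$ is the class of normal spaces $X$ such that for all sequences $(f_n)$ in $\mathcal C(X)$, $f_n\to0$ in sense $\alpha$ iff in sense $\beta$; $\mathrm{non}(\alpha,\beta)$ is the least cardinality of a normal space not in $(\alpha,\beta)$, or $\infty$ if none. *)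

(* Defs.v *)
From HB Require Import structures.
From mathcomp Require Import all_boot all_order all_algebra.
From mathcomp Require Import all_classical all_reals all_analysis.
From mathcomp Require Import Rstruct Rstruct_topology.

Set Implicit Arguments.
Unset Strict Implicit.
Unset Printing Implicit Defensive.

Import Order.TTheory GRing.Theory Num.Theory.
Local Open Scope classical_set_scope.
Local Open Scope ring_scope.

Notation RR := Rdefinitions.R.

Definition is_ideal (I : set (set nat)) : Prop :=
  (forall A B, I A -> I B -> I (A `|` B)) /\
  (forall A B, B `<=` A -> I A -> I B) /\
  (forall A : set nat, finite_set A -> I A) /\
  ~ I setT.

Definition countably_generated (I : set (set nat)) : Prop :=
  exists B : nat -> set nat, (forall k, I (B k)) /\
    forall A, I A -> exists k, A `<=` B k.

Definition Iconv0 (I : set (set nat)) (a : nat -> RR) : Prop :=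
  forall eps : RR, 0 < eps -> I [set n | eps <= `|a n|].

Definition I_p (I : set (set nat)) (X : Type) (f : nat -> X -> RR) : Prop :=
  forall x, Iconv0 I (fun n => f n x).

Definition I_u_on (I : set (set nat)) (X : Type) (A : set X)
  (f : nat -> X -> RR) : Prop :=
  forall eps : RR, 0 < eps -> I [set n | exists2 x, A x & eps <= `|f n x|].

Definition I_u (I : set (set nat)) (X : Type) (f : nat -> X -> RR) : Prop :=
  I_u_on I setT f.

Definition I_sigma_u (I : set (set nat)) (X : Type) (f : nat -> X -> RR) : Prop :=
  exists Xk : nat -> set X, setT = \bigcup_k Xk k /\ forall k, I_u_on I (Xk k) f.

Definition I_qn (I : set (set nat)) (X : Type) (f : nat -> X -> RR) : Prop :=
  exists eps : nat -> RR, (forall n, 0 < eps n) /\ Iconv0 I eps /\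
    forall x, I [set n | eps n <= `|f n x|].

Definition normal_sp (X : topologicalType) : Prop :=
  hausdorff_space X /\
  forall A B : set X, closed A -> closed B -> A `&` B = set0 ->
    exists U V : set X, [/\ open U, open V, A `<=` U, B `<=` V & U `&` V = set0].

Definition conv_mode := forall X : Type, (nat -> X -> RR) -> Prop.

Definition in_class (alpha beta : conv_mode) (X : topologicalType) : Prop :=
  normal_sp X /\
  forall f : nat -> X -> RR, (forall n, continuous (f n)) ->
    (alpha X f <-> beta X f).

Definition realizes_non (alpha beta : conv_mode) (X : topologicalType) : Prop :=
  normal_sp X /\ ~ in_class alpha beta X /\
  forall Y : topologicalType, normal_sp Y -> ~ in_class alpha beta Y ->
    exists g : X -> Y, injective g.

(** Baire space omega^omega = nat -> nat (product topology of discrete nat);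
    Cantor space 2^omega = cantor_space (product of discrete bool). *)
Definition baire_space : Type := prod_topology (fun _ : nat => nat).
HB.instance Definition _ := Pointed.on baire_space.
HB.instance Definition _ := Nbhs.on baire_space.
HB.instance Definition _ := Topological.on baire_space.

Definition baire_sub (A : set baire_space) : topologicalType := set_type A.
Definition cantor_sub (A : set cantor_space) : topologicalType := set_type A.

Definition mode_p (I : set (set nat)) : conv_mode := fun X f => @I_p I X f.
Definition mode_sigma_u (I : set (set nat)) : conv_mode := fun X f => @I_sigma_u I X f.
Definition mode_qn (I : set (set nat)) : conv_mode := fun X f => @I_qn I X f.

(* Main.v *)
From HB Require Import structures.
Require Import Defs.
From mathcomp Require Import all_boot all_order all_algebra.
From mathcomp Require Import all_classical all_reals all_analysis.
From mathcomp Require Import Rstruct Rstruct_topology.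
From mathcomp Require Import zify.
Set Implicit Arguments.
Unset Strict Implicit.
Unset Printing Implicit Defensive.
Import Order.TTheory GRing.Theory Num.Theory.
Local Open Scope classical_set_scope.
Local Open Scope ring_scope.
Section S.
Variable T : discreteTopologicalType.
Let P := prod_topology (fun _ : nat => T).
Definition cyl (z : P) (M : nat) : set P := [set w | forall i, (i < M)%N -> w i = z i].
Lemma nbhs_cylP (z : P) U : nbhs z U -> exists M, cyl z M `<=` U.
Proof.
move=> nU.
pose G : set_system P := [set U | exists M, cyl z M `<=` U].
have GF : Filter G.
  constructor.
  - by exists 0%N.
  - move=> A B [M1 h1] [M2 h2]; exists (maxn M1 M2) => w cw; split.
      by apply: h1 => i iM; apply: cw; rewrite leq_max iM.
    by apply: h2 => i iM; apply: cw; rewrite leq_max iM orbT.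
  - by move=> A B AB [M h]; exists M => w /h /AB.
have : G --> z.
  apply/cvg_sup => i A /=.
  rewrite /nbhs /=.
  move=> [B [[C oC <-] Bz] BA].
  exists i.+1 => w cw; apply: BA => /=.
  have -> : w i = z i by apply: cw.
  exact: Bz.
by move/(_ U nU).
Qed.

Lemma cyl_nbhs (z : P) M : nbhs z (cyl z M).
Proof.
elim: M => [|M IH].
  by apply: filterS (@filterT _ _ _) => w _ i.
have -> : cyl z M.+1 = cyl z M `&` (@proj nat (fun _ => T) M) @^-1` [set z M].
  apply/seteqP; split=> w.
    by move=> h; split; [move=> i iM; apply: h; rewrite ltnS ltnW|apply: h].
  move=> [h1 h2] i; rewrite ltnS leq_eqVlt => /orP[/eqP ->|]; first exact: h2.
  exact: h1.
apply: filterI => //.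
apply: (@proj_continuous nat (fun _ => T) M z).
exact: discrete_set1.
Qed.
Lemma cyl_open (z : P) M : open (cyl z M).
Proof.
rewrite openE => w cw.
have -> : cyl z M = cyl w M.
  by apply/seteqP; split=> u cu i iM; rewrite cu // cw.
exact: cyl_nbhs.
Qed.

Variable A : set P.
Let S := set_type A.
Definition scyl (x : S) M : set S := [set y : S | cyl (val x) M (val y)].

Lemma scyl_open (x : S) M : open (scyl x M).
Proof. by exists (cyl (val x) M) => //; exact: cyl_open. Qed.

Lemma scyl_in (x : S) M : scyl x M x.
Proof. by []. Qed.

Lemma scyl_nbhs (x : S) M : nbhs x (scyl x M).
Proof. by apply: open_nbhs_nbhs; split; [exact: scyl_open|]. Qed.

Lemma nbhs_scylP (x : S) U : nbhs x U -> exists M, scyl x M `<=` U.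
Proof.
rewrite /nbhs /= => -[B [[C oC <-] Bz] BU].
have [M hM] := nbhs_cylP (open_nbhs_nbhs (conj oC Bz)).
by exists M => y hy; apply: BU; apply: hM.
Qed.

Lemma fin_det_continuous (h : P -> RR) M :
  (forall z w, cyl z M w -> h w = h z) -> continuous (fun x : S => h (val x)).
Proof.
move=> hM x W /= nW.
apply: filterS (scyl_nbhs x M) => y hy /=.
rewrite (hM _ _ hy); exact: nbhs_singleton nW.
Qed.

Lemma sub_normal : normal_sp S.
Proof.
split.
  rewrite open_hausdorff => x y xy.
  have [i hi] : exists i, val x i <> val y i.
    apply/not_existsP => hn; move/eqP: xy; apply; apply: val_inj.
    by apply: functional_extensionality_dep => i; apply: contrapT; apply: hn.
  exists (scyl x i.+1, scyl y i.+1); first by split; rewrite inE.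
  split; [exact: scyl_open|exact: scyl_open|].
  apply/eqP; apply/seteqP; split => // w [/= h1 h2]; apply: hi.
  by rewrite -h1 // h2.
move=> A1 B1 cA cB AB.
have hA : forall a : S, exists M, A1 a -> scyl a M `<=` ~` B1.
  move=> a; case: (pselect (A1 a)) => Aa; last by exists 0%N.
  have : nbhs a (~` B1).
    apply: open_nbhs_nbhs; split; first exact: closed_openC.
    by move=> Ba; have : (A1 `&` B1) a by []; rewrite AB.
  by case/nbhs_scylP => M hM; exists M.
have hB : forall b : S, exists M, B1 b -> scyl b M `<=` ~` A1.
  move=> a; case: (pselect (B1 a)) => Aa; last by exists 0%N.
  have : nbhs a (~` A1).
    apply: open_nbhs_nbhs; split; first exact: closed_openC.
    by move=> Ba; have : (A1 `&` B1) a by []; rewrite AB.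
  by case/nbhs_scylP => M hM; exists M.
have [mA HA] := choice hA; have [mB HB] := choice hB.
exists (\bigcup_(a in A1) scyl a (mA a)), (\bigcup_(b in B1) scyl b (mB b)).
split.
- by apply: bigcup_open => a _; exact: scyl_open.
- by apply: bigcup_open => a _; exact: scyl_open.
- by move=> a Aa; exists a.
- by move=> a Aa; exists a.
apply/seteqP; split => // y [[a Aa ha] [b Bb hb]].
case: (leqP (mA a) (mB b)) => hab.
  apply: (HA a Aa b) Bb => i iM.
  by rewrite -(ha i iM) (hb i (leq_trans iM hab)).
apply: (HB b Bb a) Aa => i iM.
by rewrite -(hb i iM) (ha i (ltn_trans iM hab)).
Qed.
End S.
Lemma min_card (U : Type) (F : set (set U)) : F !=set0 ->
  exists A0, F A0 /\ forall B, F B -> exists g : set_type A0 -> set_type B, injective g.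
Proof.
move=> [B0 FB0].
pose J := set_type F.
have j0 : J := exist _ B0 (mem_set FB0).
pose good (X : set (J -> U)) := (forall s, X s -> forall j, (val j) (s j)) /\
  (forall s t, X s -> X t -> s <> t -> forall j, s j <> t j).
have [Sm [[gS1 gS2] maxS]] : exists Sm, good Sm /\ forall B, Sm `<` B -> ~ good B.
  apply: Zorn_bigcup => C Cg Ctot; split.
    by move=> s [X CX Xs]; apply: (Cg X CX).1.
  move=> s t [X CX Xs] [Y CY Yt].
  have [XY|YX] := Ctot X Y CX CY.
    by apply: (Cg Y CY).2 => //; apply: XY.
  by apply: (Cg X CX).2 => //; apply: YX.
have [j1 hj1] : exists j1 : J, forall b, (val j1) b -> exists2 s, Sm s & s j1 = b.
  apply: contrapT => hn.
  have hn' : forall j : J, exists b, (val j) b /\ forall s, Sm s -> s j <> b.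
    move=> j; apply: contrapT => hb; apply: hn; exists j => b jb.
    apply: contrapT => hs; apply: hb; exists b; split => // s Ss sb.
    by apply: hs; exists s.
  have [st hst] := choice hn'.
  apply: (maxS (Sm `|` [set st])).
    rewrite properEneq; split; last by move=> s Ss; left.
    apply/eqP => e.
    have : (Sm `|` [set st]) st by right.
    by rewrite -e => /(hst j0).2; apply.
  split.
    by move=> s [/gS1 //|-> j]; exact: (hst j).1.
  move=> s t [Ss|->] [St|->] st' j.
  - exact: gS2.
  - exact: (hst j).2.
  - by move=> e; apply: ((hst j).2 t St); rewrite e.
  - by [].
exists (val j1); split; first by have := valP j1; rewrite inE.
move=> B FB.
pose jB : J := exist _ B (mem_set FB).
have hc : forall b : set_type (val j1), exists s, Sm s /\ s j1 = val b.
  move=> b; have [s Ss sb] := hj1 (val b) (set_mem (valP b)).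
  by exists s.
have [sel hsel] := choice hc.
have memB : forall b, (sel b jB) \in B.
  by move=> b; apply: mem_set; apply: (gS1 _ (hsel b).1 jB).
exists (fun b => exist _ (sel b jB) (memB b)).
move=> b b' /(congr1 val) /= e.
have e' : sel b = sel b'.
  apply: contrapT => ne; exact: (gS2 _ _ (hsel b).1 (hsel b').1 ne jB e).
apply: val_inj; by rewrite -(hsel b).2 -(hsel b').2 e'.
Qed.
Definition qterm (b : nat -> bool) (k : nat) : RR := if b k then (k.+1%:R)^-1 else 0.
Fixpoint qb (b : nat -> bool) (n : nat) : RR :=
  if n is m.+1 then Num.max (qb b m) (qterm b n) else qterm b 0%N.

Lemma qb_ext b b' n : (forall k, (k <= n)%N -> b k = b' k) -> qb b n = qb b' n.
Proof.
elim: n => [|n IH] h /=; first by rewrite /qterm h.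
by rewrite IH => [|k kn]; rewrite /qterm ?h // ltnW.
Qed.

Lemma qterm_ge0 b k : 0 <= qterm b k.
Proof. by rewrite /qterm; case: (b k); rewrite ?invr_ge0 ?ler0n. Qed.

Lemma qb_ge0 b n : 0 <= qb b n.
Proof. by elim: n => [|n IH] /=; rewrite ?qterm_ge0 // le_max IH. Qed.

Lemma qb_le (r : RR) n : 0 <= r -> qb (fun k => (k.+1%:R)^-1 <= r) n <= r.
Proof.
move=> r0; have ht : forall k, qterm (fun k => (k.+1%:R)^-1 <= r) k <= r.
  by move=> k; rewrite /qterm; case: ifP.
by elim: n => [|n IH] /=; rewrite ?ht // ge_max IH ht.
Qed.

Lemma qb_ge_term b n k : (k <= n)%N -> qterm b k <= qb b n.
Proof.
elim: n => [|n IH] /=; first by rewrite leqn0 => /eqP ->.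
rewrite leq_eqVlt => /orP[/eqP ->|]; first by rewrite le_max lexx orbT.
by rewrite ltnS => /IH h; rewrite le_max h.
Qed.

Lemma inv_half (n : nat) : ((n.+1)%:R : RR)^-1 <= 2 * (n.+2%:R)^-1.
Proof.
have h1 : 0 < (n.+1%:R : RR) by rewrite ltr0n.
have h2 : 0 < (n.+2%:R : RR) by rewrite ltr0n.
rewrite -[X in X <= _]mul1r ler_pdivrMr // mulrAC ler_pdivlMr // mul1r.
by rewrite -natrM ler_nat; rewrite mul2n -addnn !addSn addnS ltnS; apply: leq_addr.
Qed.

Lemma qb_lb (r : RR) n : 0 <= r -> (n.+1%:R)^-1 <= r ->
  r <= 2 * qb (fun k => (k.+1%:R)^-1 <= r) n \/ 1 <= 2 * qb (fun k => (k.+1%:R)^-1 <= r) n.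
Proof.
move=> r0; elim: n => [|n IH] hn /=.
  right; rewrite /qterm hn invr1 mulr1; by rewrite ler1n.
case: (lerP (n.+1%:R)^-1 r) => h.
  case: (IH h) => h'; [left|right]; apply: le_trans h' _;
    by rewrite ler_pM2l // le_max lexx.
left; apply: le_trans (ltW h) _; apply: le_trans (inv_half n) _.
by rewrite ler_pM2l // le_max /qterm hn lexx orbT.
Qed.
Section Ideal.
Variable I : set (set nat).
Hypothesis hI : is_ideal I.

Lemma I_sub (A B : set nat) : B `<=` A -> I A -> I B.
Proof. by case: hI => _ [h _] BA /h; apply. Qed.
Lemma I_U (A B : set nat) : I A -> I B -> I (A `|` B).
Proof. by case: hI => h _; apply: h. Qed.
Lemma I_fin (A : set nat) : finite_set A -> I A.
Proof. by case: hI => _ [_ [h _]]; apply: h. Qed.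
Lemma I_T : ~ I setT.
Proof. by case: hI => _ [_ [_ h]]. Qed.

Lemma I_small (e : RR) : 0 < e -> I [set n | e <= (n.+1%:R)^-1].
Proof.
move=> e0; apply: I_fin; apply: (@sub_finite_set _ _ `I_(Num.truncn e^-1)); last exact: finite_II.
move=> n /= hn; rewrite /= truncn_gt_nat.
have h1 : 0 < (n.+1%:R : RR) by rewrite ltr0n.
rewrite -(invrK (n.+1%:R : RR)); rewrite lef_pV2 //; rewrite posrE ?invr_gt0 //.
Qed.
Definition delta (e : RR) : RR := Num.min e 1 / 2.
Lemma delta_gt0 e : 0 < e -> 0 < delta e.
Proof. by move=> e0; rewrite /delta divr_gt0 // lt_min e0 ltr01. Qed.
Lemma delta_key (e r q : RR) : e <= r -> (r <= 2 * q \/ 1 <= 2 * q) -> delta e <= q.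
Proof.
move=> er [h|h]; rewrite /delta ler_pdivrMr // mulrC.
  by apply: le_trans h; rewrite ge_min (le_trans er) ?lexx.
by apply: le_trans h; rewrite ge_min lexx orbT.
Qed.

Section Transfer.
Variables (Y S : Type) (f : nat -> Y -> RR) (g : nat -> S -> RR) (phs : Y -> S).
Hypothesis phs_surj : forall a, exists y, phs y = a.
Hypothesis H1 : forall n y, 0 <= g n (phs y) <= `|f n y|.
Hypothesis H2 : forall n y, (n.+1%:R)^-1 <= `|f n y| ->
  `|f n y| <= 2 * g n (phs y) \/ 1 <= 2 * g n (phs y).

Lemma absg n y : `|g n (phs y)| = g n (phs y).
Proof. by rewrite ger0_norm //; case/andP: (H1 n y). Qed.

Lemma g_le_f n y e : e <= `|g n (phs y)| -> e <= `|f n y|.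
Proof. by rewrite absg => h; apply: le_trans h _; case/andP: (H1 n y). Qed.

Lemma f_to_g n y e : e <= `|f n y| ->
  delta e <= `|g n (phs y)| \/ e <= (n.+1%:R)^-1.
Proof.
move=> h; case: (lerP (n.+1%:R)^-1 `|f n y|) => h2.
  by left; rewrite absg; apply: delta_key h (H2 h2).
by right; apply: ltW; apply: le_lt_trans h h2.
Qed.

Lemma tr_p : I_p I f <-> I_p I g.
Proof.
split=> h.
  move=> a e e0; have [y <-] := phs_surj a.
  by apply: I_sub (h y e e0) => n /=; apply: g_le_f.
move=> y e e0.
apply: I_sub (I_U (h (phs y) _ (delta_gt0 e0)) (I_small e0)) => n /=.
exact: f_to_g.
Qed.

Lemma tr_su : I_sigma_u I f <-> I_sigma_u I g.
Proof.
split=> -[X [cov hX]].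
  exists (fun k => [set a | exists2 y, X k y & phs y = a]); split.
    apply/seteqP; split => // a _; have [y <-] := phs_surj a.
    have : setT y by [].
    by rewrite cov => -[k _ Xy]; exists k => //; exists y.
  move=> k e e0; apply: I_sub (hX k e e0) => n /= [a [y Xy <-] h].
  by exists y => //; apply: g_le_f.
exists (fun k => [set y | X k (phs y)]); split.
  apply/seteqP; split => // y _.
  have : setT (phs y) by [].
  by rewrite cov => -[k _ Xy]; exists k.
move=> k e e0.
apply: I_sub (I_U (hX k _ (delta_gt0 e0)) (I_small e0)) => n /= [y Xy h].
by case: (f_to_g h) => [h'|h']; [left; exists (phs y)|right].
Qed.

Lemma tr_qn : I_qn I f <-> I_qn I g.
Proof.
split=> -[eps [ep [ec he]]].
  exists eps; split => //; split => // a; have [y <-] := phs_surj a.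
  by apply: I_sub (he y) => n /=; apply: g_le_f.
exists (fun n => Num.max (2 * eps n) (n.+1%:R)^-1); split.
  by move=> n; rewrite lt_max invr_gt0 ltr0n orbT.
split.
  move=> e e0.
  have e20 : 0 < e / 2 by rewrite divr_gt0.
  apply: I_sub (I_U (ec (e / 2) e20) (I_small e0)).
  move=> n /=; rewrite ger0_norm; last by rewrite le_max invr_ge0 ler0n orbT.
  rewrite le_max => /orP[h|h]; last by right.
  left; rewrite ger0_norm; last exact: ltW.
  by rewrite ler_pdivrMr // mulrC.
move=> y.
have h12 : (0:RR) < 1/2 by rewrite divr_gt0.
apply: I_sub (I_U (he (phs y)) (ec (1/2) h12)).
move=> n /=; rewrite ge_max => /andP[h1 h2].
have e0 := ep n.
case: (H2 h2) => h3.
  left; rewrite absg.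
  have := le_trans h1 h3.
  by rewrite ler_pM2l.
case: (lerP (1/2) (eps n)) => h4.
  by right; rewrite ger0_norm // ltW.
left; rewrite absg; apply: le_trans (ltW h4) _.
by rewrite ler_pdivrMr // mulrC.
Qed.
End Transfer.
End Ideal.

Definition pos (n k : nat) : nat := (n * n + k)%N.
Lemma pos_inj n k n' k' : (k <= n)%N -> (k' <= n')%N -> pos n k = pos n' k' -> n = n' /\ k = k'.
Proof.
rewrite /pos => h1 h2 e.
have nn : n = n'.
  apply/eqP; rewrite eqn_leq; apply/andP; split; rewrite leqNgt; apply/negP => lt.
    have : (n' * n' + k' < n * n + k)%N.
      apply: (@leq_trans (n'.+1 * n'.+1)); first by rewrite mulSn mulnS addnA ltnS addnC leq_add2r (leq_trans h2) // leq_addl.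
      exact: leq_trans (leq_mul lt lt) (leq_addr _ _).
    by rewrite e ltnn.
  have : (n * n + k < n' * n' + k')%N.
    apply: (@leq_trans (n.+1 * n.+1)); first by rewrite mulSn mulnS addnA ltnS addnC leq_add2r (leq_trans h1) // leq_addl.
    exact: leq_trans (leq_mul lt lt) (leq_addr _ _).
  by rewrite e ltnn.
by split => //; move: e; rewrite nn => /eqP; rewrite eqn_add2l => /eqP.
Qed.

Lemma pos_lt n k : (k <= n)%N -> (pos n k < n.+1 * n.+1)%N.
Proof.
move=> kn; rewrite /pos; nia.
Qed.

Section Coding.
Variables (T : discreteTopologicalType) (t0 t1 : T).
Hypothesis t01 : t0 != t1.
Let P := prod_topology (fun _ : nat => T).
Variables (Y : Type) (f : nat -> Y -> RR).

Definition phi (y : Y) : P := fun j =>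
  if `[< exists n k, [/\ j = pos n k, (k <= n)%N & (k.+1%:R)^-1 <= `|f n y|] >] then t1 else t0.
Let A' : set P := range phi.
Let S := set_type A'.
Definition phs (y : Y) : S := exist _ (phi y) (mem_set (imageT phi y)).
Definition gq (z : P) (n : nat) : RR := qb (fun k => z (pos n k) == t1) n.
Definition gc n (a : S) : RR := gq (val a) n.

Lemma gc_phs n y : gc n (phs y) = qb (fun k => (k.+1%:R)^-1 <= `|f n y|) n.
Proof.
apply: qb_ext => k kn /=; rewrite /phi.
case: asboolP => [[n' [k' [e h1 h2]]]|hn].
  rewrite eqxx; have [en ek] := pos_inj kn h1 e; subst; by rewrite h2.
rewrite (negbTE t01); apply/esym/negP => hk; apply: hn.
by exists n, k; split.
Qed.

Lemma gc_cont n : continuous (gc n).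
Proof.
apply: (@fin_det_continuous T A' (fun z => gq z n) (n.+1 * n.+1)%N) => z w hzw.
apply: qb_ext => k kn; by rewrite hzw // pos_lt.
Qed.

Lemma phs_surj (a : S) : exists y, phs y = a.
Proof.
case: a => z hz; have [y _ e] := set_mem hz.
by exists y; apply: val_inj => /=.
Qed.

Lemma transfer (I : set (set nat)) : is_ideal I ->
  exists A' : set P, exists g : nat -> set_type A' -> RR,
  [/\ (forall n, continuous (g n)),
      (I_p I f <-> I_p I g), (I_sigma_u I f <-> I_sigma_u I g),
      (I_qn I f <-> I_qn I g) &
      exists h : set_type A' -> Y, injective h].
Proof.
move=> hI; exists A', gc.
have H1 : forall n y, 0 <= gc n (phs y) <= `|f n y|.
  by move=> n y; rewrite gc_phs qb_ge0 qb_le.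
have H2 : forall n y, (n.+1%:R)^-1 <= `|f n y| ->
    `|f n y| <= 2 * gc n (phs y) \/ 1 <= 2 * gc n (phs y).
  by move=> n y h; rewrite gc_phs; apply: qb_lb.
split.
- exact: gc_cont.
- exact: (@tr_p I hI Y S f gc phs phs_surj H1 H2).
- exact: (@tr_su I hI Y S f gc phs phs_surj H1 H2).
- exact: (@tr_qn I hI Y S f gc phs phs_surj H1 H2).
have [h hh] := choice phs_surj.
exists h => a b e; by rewrite -(hh a) -(hh b) e.
Qed.
End Coding.

Definition good_mode (I : set (set nat)) (m : conv_mode) :=
  m = mode_p I \/ m = mode_sigma_u I \/ m = mode_qn I.

Lemma good_mode_tr I m (Y S : Type) (f : nat -> Y -> RR) (g : nat -> S -> RR) :
  good_mode I m -> (I_p I f <-> I_p I g) -> (I_sigma_u I f <-> I_sigma_u I g) ->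
  (I_qn I f <-> I_qn I g) -> (m Y f <-> m S g).
Proof. by case=> [->|[->|->]]. Qed.

Lemma assemble (T : discreteTopologicalType) (t0 t1 : T) (t01 : t0 != t1)
  (I : set (set nat)) (hI : is_ideal I) (al be : conv_mode) :
  good_mode I al -> good_mode I be ->
  (exists A : set (prod_topology (fun _ : nat => T)), ~ in_class al be (set_type A)) ->
  exists A : set (prod_topology (fun _ : nat => T)), realizes_non al be (set_type A).
Proof.
move=> ga gb hex.
pose F := [set A : set (prod_topology (fun _ : nat => T)) | ~ in_class al be (set_type A)].
have [A0 [FA0 hA0]] := @min_card _ F hex.
exists A0; split; first exact: sub_normal.
split => // Y nY hY.
have [f [fc hf]] : exists f : nat -> Y -> RR, (forall n, continuous (f n)) /\ ~ (al Y f <-> be Y f).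
  apply: contrapT => hn; apply: hY; split => // f fc.
  apply: contrapT => hn'; apply: hn; by exists f.
have [A' [g [gc trp trs trq [h hinj]]]] := transfer t01 f hI.
have FA' : F A'.
  move=> [_ hc]; apply: hf.
  rewrite (good_mode_tr ga trp trs trq) (good_mode_tr gb trp trs trq).
  exact: hc.
have [k kinj] := hA0 _ FA'.
exists (h \o k) => a b /= e; exact/kinj/hinj.
Qed.


Lemma le_inv (a b : RR) : 0 < a -> 0 < b -> (a <= b^-1) = (b <= a^-1).
Proof.
move=> a0 b0; rewrite -{1}(invrK a) lef_pV2 // posrE ?invr_gt0 //.
Qed.

Lemma inv_trunc (e : RR) m : 0 < e -> e <= (m.+1%:R)^-1 -> (m < Num.truncn e^-1)%N.
Proof.
move=> e0 h; rewrite truncn_gt_nat -le_inv //; by rewrite ltr0n.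
Qed.

Fixpoint nseqf (nx : nat -> nat -> nat) (k : nat) : nat :=
  if k is k'.+1 then nx k (nseqf nx k') else nx 0%N 0%N.

Lemma exist1 (I : set (set nat)) (hI : is_ideal I) :
  exists A : set (prod_topology (fun _ : nat => nat)), ~ in_class (mode_p I) (mode_sigma_u I) (set_type A) /\
     ~ in_class (mode_p I) (mode_qn I) (set_type A).
Proof.
pose A : set (prod_topology (fun _ : nat => nat)) := [set x | forall K, I [set n | (x n <= K)%N]].
pose f n (a : set_type A) : RR := (((val a n).+1)%:R)^-1.
have f0 : forall n a, 0 < f n a by move=> n a; rewrite invr_gt0 ltr0n.
have fa : forall n a, `|f n a| = f n a by move=> n a; rewrite ger0_norm // ltW.
have fc : forall n, continuous (f n).
  move=> n; apply: (@fin_det_continuous nat A (fun z => (((z n).+1)%:R)^-1) n.+1).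
  by move=> z w h; rewrite h.
have fp : I_p I f.
  move=> a e e0; have hA : A (val a) by exact: set_mem (valP a).
  apply: (I_sub hI _ (hA (Num.truncn e^-1))) => n /=.
  by rewrite fa => /(inv_trunc e0) /ltnW.
exists A; split; case=> _ /(_ f fc) [/(_ fp) h _].
  case: h => X [cov hX].
  pose B k := [set n | exists2 a, X k a & (k.+1%:R)^-1 <= `|f n a|].
  have IB : forall k, I (B k) by move=> k; apply: hX; rewrite invr_gt0 ltr0n.
  have hnx : forall k m, exists n, (m < n)%N /\ ~ B k n.
    move=> k m; apply: contrapT => hn; apply: (I_T hI).
    apply: (I_sub hI _ (I_U hI (IB k) (I_fin hI (finite_II m.+1)))) => n _.
    case: (ltnP m n) => mn; last by right.
    left; apply: contrapT => nb; apply: hn; by exists n.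
  have hnx2 : forall k, exists g : nat -> nat, forall m, (m < g m)%N /\ ~ B k (g m).
    by move=> k; have [g hg] := choice (hnx k); exists g.
  have [nx hnx'] := choice hnx2.
  pose ns := nseqf nx.
  have ns_lt : forall k, (ns k < ns k.+1)%N by move=> k; exact: (hnx' k.+1 (ns k)).1.
  have ns_mono : forall k l, (k < l)%N -> (ns k < ns l)%N.
    move=> k l; elim: l => [//|l IH]; rewrite ltnS leq_eqVlt => /orP[/eqP ekl|/IH h].
      by rewrite ekl; apply: ns_lt.
    exact: ltn_trans h (ns_lt l).
  have ns_inj : forall k l, ns k = ns l -> k = l.
    move=> k l e; case: (ltngtP k l) => // [/ns_mono|/ns_mono]; by rewrite e ltnn.
  have ns_nB : forall k, ~ B k (ns k).
    case=> [|k]; [exact: (hnx' 0%N 0%N).2|exact: (hnx' k.+1 (ns k)).2].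
  pose xs : prod_topology (fun _ : nat => nat) := fun n =>
    if `[< exists k, ns k = n >] then xget 0%N [set k | ns k = n] else n.
  have xs_ns : forall k, xs (ns k) = k.
    move=> k; rewrite /xs; case: asboolP => [he|hn]; last by exfalso; apply: hn; exists k.
    by apply: ns_inj; exact: (xgetPex 0%N he).
  have xsA : A xs.
    move=> K; apply: (I_fin hI).
    apply: (@sub_finite_set _ _ (`I_K.+1 `|` (ns @` `I_K.+1))); last first.
      by rewrite finite_setU; split; [exact: finite_II|apply: finite_image; exact: finite_II].
    move=> n /=; case: (pselect (exists k, ns k = n)) => [[k <-]|hn].
      by rewrite xs_ns => kK; right; exists k => //=.
    rewrite /xs; case: asboolP => // _ nK; left => /=; by rewrite ltnS.
  pose a : set_type A := exist _ xs (mem_set xsA).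
  have : setT a by [].
  rewrite cov => -[k _ Xa]; apply: (ns_nB k); exists a => //.
  by rewrite fa /f /= xs_ns.
case: h => eps [ep [ec he]].
pose xs : prod_topology (fun _ : nat => nat) := fun n => (Num.truncn (eps n)^-1).-1.
have xsA : A xs.
  move=> K; have hK : (0 : RR) < (K.+2%:R)^-1 by rewrite invr_gt0 ltr0n.
  apply: (I_sub hI _ (ec _ hK)) => n /=; rewrite /xs => h.
  have : (Num.truncn (eps n)^-1 <= K.+1)%N by move: h; case: (Num.truncn _).
  rewrite truncn_le_nat => h2; rewrite ger0_norm; last exact: ltW (ep n).
  rewrite -[eps n]invrK lef_pV2 ?posrE ?invr_gt0 ?ltr0n ?ep //; exact: ltW.
pose a : set_type A := exist _ xs (mem_set xsA).
apply: (I_T hI).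
apply: (I_sub hI _ (I_U hI (he a) (ec 1 ltr01))) => n _ /=.
case: (lerP 1 `|eps n|) => h1; first by right.
left; rewrite fa /f /= /xs.
have e0 := ep n; rewrite ger0_norm in h1; last exact: ltW.
have t1 : (0 < Num.truncn (eps n)^-1)%N.
  by rewrite truncn_gt0 -(invr1) lef_pV2 ?posrE ?ltr01 // ltW.
rewrite prednK // le_inv ?ltr0n //.
by rewrite truncn_le invr_ge0 ltW.
Qed.


Lemma exist2 (I : set (set nat)) (hI : is_ideal I) : ~ countably_generated I ->
  exists A : set (prod_topology (fun _ : nat => bool)), ~ in_class (mode_qn I) (mode_sigma_u I) (set_type A).
Proof.
move=> ncg.
pose A : set (prod_topology (fun _ : nat => bool)) := [set x | I [set n | x n]].
pose f n (a : set_type A) : RR := if val a n then 1 else 0.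
have fa : forall n a, `|f n a| = f n a.
  by move=> n a; rewrite ger0_norm // /f; case: ifP; rewrite ?ler01.
have fc : forall n, continuous (f n).
  move=> n; apply: (@fin_det_continuous bool A (fun z => if z n then 1 else 0) n.+1).
  by move=> z w h; rewrite h.
have fq : I_qn I f.
  exists (fun n => (n.+1%:R)^-1); split; first by move=> n; rewrite invr_gt0 ltr0n.
  split.
    move=> e e0; apply: (I_sub hI _ (I_small hI e0)) => n /=.
    by rewrite ger0_norm // invr_ge0 ler0n.
  move=> a; have hA : A (val a) by exact: set_mem (valP a).
  apply: (I_sub hI _ hA) => n /=; rewrite fa /f; case: ifP => // _.
  by rewrite leNgt invr_gt0 ltr0n.
exists A; case=> _ /(_ f fc) [/(_ fq) [X [cov hX]] _].
apply: ncg.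
exists (fun k => [set n | exists2 a, X k a & 1 <= `|f n a|]); split.
  by move=> k; apply: hX; rewrite ltr01.
move=> C IC.
pose x : prod_topology (fun _ : nat => bool) := fun n => `[< C n >].
have xA : A x.
  apply: (I_sub hI _ IC) => n /=; by rewrite /x => /asboolP.
pose a : set_type A := exist _ x (mem_set xA).
have : setT a by [].
rewrite cov => -[k _ Xa]; exists k => n Cn; exists a => //.
by rewrite fa /f /= /x; case: asboolP.
Qed.

Theorem theorem8p2 (I : set (set nat)) (hI : is_ideal I) :
  (exists A : set baire_space,
      realizes_non (mode_p I) (mode_sigma_u I) (baire_sub A)) /\
  (~ countably_generated I ->
    exists A : set cantor_space,
      realizes_non (mode_qn I) (mode_sigma_u I) (cantor_sub A)) /\
  (exists A : set baire_space,
      realizes_non (mode_p I) (mode_qn I) (baire_sub A)).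
Proof.
have n01 : (0%N : nat) != 1%N by [].
have b01 : false != true by [].
have [A1 [h1 h3]] := exist1 hI.
split; [|split].
- have [A hA] := @assemble nat 0%N 1%N n01 I hI (mode_p I) (mode_sigma_u I)
    (or_introl erefl) (or_intror (or_introl erefl)) (ex_intro _ A1 h1).
  by exists A.
- move=> ncg; have [A2 h2] := exist2 hI ncg.
  have [A hA] := @assemble bool false true b01 I hI (mode_qn I) (mode_sigma_u I)
    (or_intror (or_intror erefl)) (or_intror (or_introl erefl)) (ex_intro _ A2 h2).
  by exists A.
- have [A hA] := @assemble nat 0%N 1%N n01 I hI (mode_p I) (mode_qn I)
    (or_introl erefl) (or_intror (or_intror erefl)) (ex_intro _ A1 h3).
  by exists A.
Qed.
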